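(* Let $n\ge 1$, $m\ge 2$, $0\le k\le n-1$, and let $\mathcal{C}^k_{ac}$ be the class of all complete acyclic $k$-bounded CP-nets over $n$ variables of domain size $m$, over the instance space $\mathcal{X}_{swap}$. For every $c\in\mathcal{C}^k_{ac}$, letting $e_c$ denote the number of edges of $c$, \[(m-1)\mathcal{M}_k\le\mathrm{TD}(c,\mathcal{C}^k_{ac})\le e_c+n(m-1)\mathcal{U}_k.\]
   Context: Variables $V=\{v_1,\dots,v_n\}$, each with a finite domain of size $m$. An outcome assigns a value to every variable; $\mathcal{O}_X$ denotes assignments to $X\subseteq V$. A complete CP-net specifies for each $v_i$ a parent set $Pa(v_i)\subseteq V\setminus\{v_i\}$ and, for each context $\gamma\in\mathcal{O}_{Pa(v_i)}$, a strict total order $\succ^{v_i}_\gamma$ on $D_{v_i}$; parents are non-dummy. Its edges are the pairs $(v_j,v_i)$ with $v_j\in Pa(v_i)$; acyclic means this graph is acyclic; $k$-bounded means all $|Pa(v_i)|\le k$. Improving flip: changing only $v_i$ to a value preferred under $\succ^{v_i}_{o[Pa(v_i)]}$; $o'\succ o$ iff a nonempty sequence of improving flips leads from $o$ to $o'$. A swap is an ordered pair $x=(x.1,x.2)$ of outcomes differing in exactly one variable; $\mathcal{X}_{swap}$ contains exactly one ordering of each such pair (fixed arbitrarily); a CP-net $N$ is the concept $c_N(x)=1$ iff $x.1\succ x.2$. $\mathrm{TD}(c,\mathcal{C})$ is the minimum size of a set of labeled examples consistent with $c$ and with no other concept of $\mathcal{C}$. $\mathcal{M}_k=(n-k)m^k+\frac{m^k-1}{m-1}$.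 $\mathcal{U}_k$ is the smallest size of a set $S\subseteq\{1,\dots,m\}^{n-1}$ whose projection onto every set of $k$ coordinates contains all $m^k$ vectors. *)

(* Defs.v *)
From mathcomp Require Import all_boot.
Set Implicit Arguments. Unset Strict Implicit. Unset Printing Implicit Defensive.

Notation outcome n m := {ffun 'I_n -> 'I_m}.

(* A (complete) CP-net: parent sets, and for every variable i and every
   outcome o a binary relation on D_i, meant as the strict total order
   >^{v_i}_{o[Pa(v_i)]} ("a preferred to b").  Dependence on the context
   o[Pa(v_i)] only is imposed in [valid_cpnet]. *)
Notation cpnet n m :=
  ({ffun 'I_n -> {set 'I_n}} * {ffun 'I_n * outcome n m -> {ffun 'I_m * 'I_m -> bool}})%type.

Section CPnets.
Variables n m : nat.

Definition pa (N : cpnet n m) (i : 'I_n) : {set 'I_n} := N.1 i.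
Definition pref (N : cpnet n m) (i : 'I_n) (o : outcome n m) (a b : 'I_m) : bool :=
  N.2 (i, o) (a, b).

Definition dep_edge (N : cpnet n m) : rel 'I_n := fun j i => j \in pa N i.

Definition acyclic (N : cpnet n m) : bool :=
  [forall i, forall j, dep_edge N i j ==> ~~ connect (dep_edge N) j i].

Definition valid_cpnet (k : nat) (N : cpnet n m) : bool :=
  [&&
      [forall i, forall o : outcome n m, forall a, ~~ pref N i o a a],
      [forall i, forall o : outcome n m, forall a, forall b, forall c,
          pref N i o a b && pref N i o b c ==> pref N i o a c],
      [forall i, forall o : outcome n m, forall a, forall b,
          (a != b) ==> pref N i o a b || pref N i o b a],
      [forall i, i \notin pa N i],
      [forall i, forall o : outcome n m, forall o' : outcome n m,
          [forall j in pa N i, o j == o' j] ==>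
          [forall a, forall b, pref N i o a b == pref N i o' a b]],
      [forall i, forall j in pa N i, exists o : outcome n m, exists o' : outcome n m,
          [forall l, (l != j) ==> (o l == o' l)] &&
          [exists a, exists b, pref N i o a b != pref N i o' a b]],
      [forall i, #|pa N i| <= k]
    & acyclic N].

Definition edges (N : cpnet n m) : nat := \sum_i #|pa N i|.

Definition iflip (N : cpnet n m) : rel (outcome n m) := fun o o' =>
  [exists i, [&& [forall j, (j != i) ==> (o' j == o j)], o' i != o i &
                 pref N i o (o' i) (o i)]].

Definition succ (N : cpnet n m) (a b : outcome n m) : bool :=
  [exists o1 : outcome n m, iflip N b o1 && connect (iflip N) o1 a].

Definition is_swap (x : outcome n m * outcome n m) : bool :=
  [exists i, (x.1 i != x.2 i) && [forall j, (j != i) ==> (x.1 j == x.2 j)]].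

Definition swap_space (X : {set outcome n m * outcome n m}) : bool :=
  [forall x : outcome n m * outcome n m, (x \in X) ==> is_swap x] &&
  [forall x : outcome n m * outcome n m, is_swap x ==> ((x \in X) (+) ((x.2, x.1) \in X))].

Definition concept (N : cpnet n m) (x : outcome n m * outcome n m) : bool :=
  succ N x.1 x.2.

Definition teaching_set (k : nat) (X S : {set outcome n m * outcome n m})
    (N : cpnet n m) : bool :=
  (S \subset X) &&
  [forall N' : cpnet n m, valid_cpnet k N' ==>
     ([forall x in S, concept N' x == concept N x] ==>
      [forall x in X, concept N' x == concept N x])].

(* teaching dimension (X itself is always a teaching set, so the min is attained) *)
Definition TD (k : nat) (X : {set outcome n m * outcome n m}) (N : cpnet n m) : nat :=
  \big[minn/#|X|]_(S : {set outcome n m * outcome n m} | teaching_set k X S N) #|S|.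

End CPnets.

(* M_k = (n-k) m^k + (m^k - 1)/(m - 1)  (exact division for m >= 2) *)
Definition Mk (n m k : nat) : nat := (n - k) * m ^ k + (m ^ k - 1) %/ (m - 1).

Definition k_covering (n m k : nat) (S : {set {ffun 'I_(n.-1) -> 'I_m}}) : bool :=
  [forall K : {set 'I_(n.-1)}, (#|K| == k) ==>
     [forall v : {ffun 'I_(n.-1) -> 'I_m},
        [exists s in S, [forall j in K, s j == v j]]]].

Definition Uk (n m k : nat) : nat :=
  \big[minn/#|{ffun 'I_(n.-1) -> 'I_m}|]_(S : {set {ffun 'I_(n.-1) -> 'I_m}} | @k_covering n m k S) #|S|.

(* Main.v *)
Require Import Defs.
From mathcomp Require Import all_boot zify.
Set Implicit Arguments. Unset Strict Implicit. Unset Printing Implicit Defensive.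

Section Basics.
Variables n m : nat.
Implicit Types (N : cpnet n m) (o : outcome n m).

Definition strict_tot (r : 'I_m -> 'I_m -> bool) :=
  [/\ forall a, ~~ r a a, forall a b c, r a b -> r b c -> r a c
    & forall a b, a != b -> r a b || r b a].

Definition validp k N : Prop :=
  [/\ forall i o, strict_tot (pref N i o),
      forall i, i \notin pa N i,
      forall i o o', {in pa N i, forall j, o j = o' j} -> forall a b, pref N i o a b = pref N i o' a b,
      forall i, #|pa N i| <= k &
      acyclic N].

Definition nondummy N : Prop :=
  forall i, forall j, j \in pa N i -> exists o, exists o',
      (forall l, l != j -> o l = o' l) /\ exists a, exists b, pref N i o a b != pref N i o' a b.

Lemma valid_validp k N : valid_cpnet k N -> validp k N /\ nondummy N.
Proof.
case/and5P => /forallP H1 /forallP H2 /forallP H3 /forallP H4 /and4P [/forallP H5 /forallP H6 /forallP H7 H8].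
split.
  split => //.
  - move=> i o; split.
    + by move=> a; move: (H1 i) => /forallP /(_ o) /forallP /(_ a).
    + move=> a b c ab bc; move: (H2 i) => /forallP /(_ o) /forallP /(_ a) /forallP /(_ b) /forallP /(_ c).
      by rewrite ab bc.
    + by move=> a b; move: (H3 i) => /forallP /(_ o) /forallP /(_ a) /forallP /(_ b) /implyP.
  - move=> i o o' H a b; move: (H5 i) => /forallP /(_ o) /forallP /(_ o') /implyP.
    have -> : [forall (j | j \in pa N i), o j == o' j].
      by apply/forall_inP => j /H ->.
    by move=> /(_ isT) /forallP /(_ a) /forallP /(_ b) /eqP.
move=> i j jp; move: (H6 i) => /forall_inP /(_ j jp) /existsP [o /existsP [o' /andP [/forallP A /existsP [a /existsP [b B]]]]].
exists o, o'; split; last by exists a, b.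
by move=> l /(implyP (A l)) /eqP.
Qed.

Lemma validp_valid k N : validp k N -> nondummy N -> valid_cpnet k N.
Proof.
case=> H1 H2 H3 H4 H5 H6.
apply/and5P; split.
- apply/forallP => i; apply/forallP => o; apply/forallP => a; by case: (H1 i o).
- apply/forallP => i; apply/forallP => o; apply/forallP => a; apply/forallP => b; apply/forallP => c.
  apply/implyP => /andP [ab bc]; case: (H1 i o) => _ T _; exact: T ab bc.
- apply/forallP => i; apply/forallP => o; apply/forallP => a; apply/forallP => b.
  apply/implyP; case: (H1 i o) => _ _; exact.
- by apply/forallP.
apply/and4P; split => //.
- apply/forallP => i; apply/forallP => o; apply/forallP => o'; apply/implyP => /forall_inP H.
  apply/forallP => a; apply/forallP => b; apply/eqP; by apply: H3 => j /H /eqP.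
- apply/forallP => i; apply/forall_inP => j jp.
  have [o [o' [A [a [b B]]]]] := H6 i j jp.
  apply/existsP; exists o; apply/existsP; exists o'; apply/andP; split.
    by apply/forallP => l; apply/implyP => /A ->.
  by apply/existsP; exists a; apply/existsP; exists b.
- by apply/forallP.
Qed.

Lemma st_asym r a b : strict_tot r -> r a b -> ~~ r b a.
Proof. case=> I T _ ab; apply/negP => ba; by move: (I a); rewrite (T _ _ _ ab ba). Qed.

Lemma st_neg r a b : strict_tot r -> a != b -> r b a = ~~ r a b.
Proof.
move=> H ab; case: (H) => _ _ Tot; case E: (r a b) => /=.
  by apply/negbTE; apply: st_asym E.
by move: (Tot _ _ ab); rewrite E.
Qed.

Lemma concept_ext N N' : (forall i o a b, pref N' i o a b = pref N i o a b) ->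
  concept N' =1 concept N.
Proof.
move=> H x; rewrite /concept /succ.
have E : iflip N' =2 iflip N.
  move=> o o'; rewrite /iflip; apply: eq_existsb => i; by rewrite H.
apply: eq_existsb => o1; by rewrite E (eq_connect E).
Qed.

Definition anc N (j : 'I_n) := #|[set p | connect (dep_edge N) p j]|.

Lemma anc_lt N p j : acyclic N -> p \in pa N j -> anc N p < anc N j.
Proof.
move=> /forallP Ac pj; apply: proper_card; rewrite properEneq; apply/andP; split.
  apply/negP => /eqP E.
  have : j \in [set p0 | connect (dep_edge N) p0 j] by rewrite inE connect0.
  rewrite -E inE => C.
  by move: (Ac p) => /forallP /(_ j) /implyP /(_ pj); rewrite C.
apply/subsetP => q; rewrite !inE => C; apply: connect_trans C _; exact: connect1.
Qed.

Lemma no_cycle k N : validp k N -> forall u v, iflip N u v -> connect (iflip N) v u -> False.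
Proof.
case=> H1 H2 H3 H4 H5 u v uv vu.
set Cyc := [set z | connect (iflip N) u z && connect (iflip N) z u].
set C := [set j | [exists z in Cyc, z j != u j]].
have vC : v \in Cyc by rewrite inE vu connect1.
have [i0 /andP [_ /andP [vi0 _]]] := existsP uv.
have i0C : i0 \in C by rewrite inE; apply/existsP; exists v; rewrite vC.
case: (arg_minnP (anc N) i0C) => j jC jmin.
have ctx : forall z, z \in Cyc -> forall p, p \in pa N j -> z p = u p.
  move=> z zC p pj; apply/eqP; apply/negP => /negP ne.
  have : p \in C by rewrite inE; apply/existsP; exists z; rewrite zC.
  move=> /jmin; rewrite leqNgt (anc_lt H5 pj) //.
set ord := pref N j u.
have ordz : forall z, z \in Cyc -> forall a b, pref N j z a b = ord a b.
  move=> z zC a b; apply: H3 => p pj; exact: ctx.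
have [Ir Tr Tot] := H1 j u.
pose geq a b := (a == b) || ord a b.
have geqT : forall a b c, geq a b -> geq b c -> geq a c.
  move=> a b c; rewrite /geq; case/orP => [/eqP -> //|ab]; case/orP => [/eqP <-|bc].
    by rewrite ab orbT.
  by apply/orP; right; exact: Tr ab bc.
have step : forall z y, z \in Cyc -> iflip N z y -> geq (y j) (z j).
  move=> z y zC /existsP [i /and3P [/forallP A yi P]].
  case: (eqVneq i j) => [eij|nij].
    subst i; by rewrite /geq -(ordz z zC) P orbT.
  by move: (A j) => /implyP; rewrite eq_sym nij => /(_ isT) /eqP ->; rewrite /geq eqxx.
have pth : forall p z, z \in Cyc -> path (iflip N) z p -> last z p \in Cyc -> geq ((last z p) j) (z j).
  elim=> [|y p IH] z zC /=; first by rewrite /geq eqxx.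
  case/andP => zy py lC.
  have yC : y \in Cyc.
    move: zC; rewrite !inE => /andP [uz zu]; apply/andP; split.
      by apply: connect_trans uz (connect1 zy).
    move: (lC); rewrite inE => /andP [_ lu].
    by apply: connect_trans _ lu; apply/connectP; exists p.
  exact: geqT (IH y yC py lC) (step z y zC zy).
have uC : u \in Cyc by rewrite inE connect0.
have jC' : j \in C := jC. move: jC'; rewrite inE => /existsP [z /andP [zC zne]].
move: (zC); rewrite inE => /andP [/connectP [p1 p1P p1L] /connectP [p2 p2P p2L]].
have g1 := pth p1 u uC p1P; rewrite -p1L in g1; move: (g1 zC).
have g2 := pth p2 z zC p2P; rewrite -p2L in g2; move: (g2 uC).
rewrite /geq (negbTE zne) eq_sym (negbTE zne) /= => A B.
by move: (Ir (u j)); rewrite (Tr _ _ _ A B).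
Qed.

Lemma swap_concept k N : validp k N -> forall i (x y : outcome n m),
  (forall l, l != i -> x l = y l) -> x i != y i -> concept N (x, y) = pref N i y (x i) (y i).
Proof.
move=> V i x y A xy; case: (V) => H1 H2 H3 H4 H5.
rewrite /concept /succ /=.
case P: (pref N i y (x i) (y i)).
  apply/existsP; exists x; rewrite connect0 andbT.
  apply/existsP; exists i; apply/and3P; split => //.
  by apply/forallP => l; apply/implyP => /A ->.
apply/negbTE/negP => /existsP [o1 /andP [yo1 o1x]].
have xi : iflip N x y.
  apply/existsP; exists i; apply/and3P; split; first by apply/forallP => l; apply/implyP => /A ->.
    by rewrite eq_sym.
  have [_ _ Tot] := H1 i y.
  move: (Tot _ _ xy); rewrite P /= => Q.
  rewrite (H3 i x y) // => l li; apply: A; apply/negP => /eqP E; subst l.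
  by move: (H2 i); rewrite li.
apply: (no_cycle V yo1); apply: connect_trans o1x (connect1 xi).
Qed.
End Basics.

Section Norm.
Variables n m : nat.
Implicit Types (N : cpnet n m) (o : outcome n m).

Definition upd o (j : 'I_n) (v : 'I_m) : outcome n m := [ffun l => if l == j then v else o l].

Lemma updE o j v l : upd o j v l = if l == j then v else o l.
Proof. by rewrite ffunE. Qed.

Definition relv N (i : 'I_n) : {set 'I_n} :=
  [set j in pa N i | [exists o : outcome n m, exists o' : outcome n m,
     [forall l, (l != j) ==> (o l == o' l)] &&
     [exists a, exists b, pref N i o a b != pref N i o' a b]]].

Definition norm N : cpnet n m := ([ffun i => relv N i], N.2).

Lemma norm_pa N i : pa (norm N) i = relv N i.
Proof. by rewrite /pa ffunE. Qed.

Lemma norm_pref N i o a b : pref (norm N) i o a b = pref N i o a b.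
Proof. by []. Qed.

Lemma relv_dep k N : validp k N -> forall i o o', {in relv N i, forall j, o j = o' j} ->
  forall a b, pref N i o a b = pref N i o' a b.
Proof.
case=> H1 H2 H3 H4 H5 i.
suff S : forall d o o', #|[set j | o j != o' j]| <= d -> {in relv N i, forall j, o j = o' j} ->
  forall a b, pref N i o a b = pref N i o' a b.
  by move=> o o'; apply: (S _ o o' (leqnn _)).
elim=> [|d IH] o o' Hd HR a b.
  have -> // : o = o'.
  apply/ffunP => j; apply/eqP; apply/negPn/negP => ne.
  by move: Hd; rewrite leqn0 => /eqP /card0_eq /(_ j); rewrite inE ne.
case: (set_0Vmem [set j | o j != o' j]) => [E|[j]].
  have -> // : o = o'.
  apply/ffunP => j; apply/eqP; apply/negPn/negP => ne.
  have : j \in [set j | o j != o' j] by rewrite inE.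
  by rewrite E inE.
rewrite inE => ne.
set o1 := upd o j (o' j).
have P1 : pref N i o1 a b = pref N i o' a b.
  apply: IH.
    have : [set l | o1 l != o' l] \proper [set j | o j != o' j].
      rewrite properE; apply/andP; split.
        apply/subsetP => l; rewrite !inE /o1 updE; case: (l =P j) => [->|//]; by rewrite eqxx.
      apply/subsetPn; exists j; first by rewrite inE.
      by rewrite inE /o1 updE eqxx eqxx.
    move/proper_card => C; rewrite -ltnS; exact: leq_trans C Hd.
  move=> l lR; rewrite /o1 updE; case: (l =P j) => [->//|_]; exact: HR.
rewrite -P1.
case jp: (j \in pa N i).
  have jR : j \notin relv N i by apply/negP => /HR /eqP; rewrite (negbTE ne).
  move: jR; rewrite inE jp /= => /existsPn /(_ o) /existsPn /(_ o1).
  rewrite negb_and => /orP [/forallPn [l]|].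
    rewrite negb_imply /o1 updE => /andP [/negbTE -> ]; by rewrite eqxx.
  move/existsPn => /(_ a) /existsPn /(_ b); by rewrite negbK => /eqP.
apply: H3 => l lp; rewrite /o1 updE; case: (l =P j) => // E; subst l; by rewrite lp in jp.
Qed.

Lemma norm_valid k N : validp k N -> valid_cpnet k (norm N).
Proof.
move=> V; have [H1 H2 H3 H4 H5] := V.
have sub : forall i, relv N i \subset pa N i.
  by move=> i; apply/subsetP => j; rewrite inE => /andP [].
apply: validp_valid.
  split.
  - exact: H1.
  - by move=> i; rewrite norm_pa; apply/negP => /(subsetP (sub i)); apply/negP.
  - move=> i o o'; rewrite norm_pa => A a b; exact: relv_dep V i o o' A a b.
  - move=> i; rewrite norm_pa; exact: leq_trans (subset_leq_card (sub i)) (H4 i).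
  - apply/forallP => i; apply/forallP => j; apply/implyP => ij.
    have ij' : dep_edge N i j by move: ij; rewrite /dep_edge norm_pa => /(subsetP (sub j)).
    move: H5 => /forallP /(_ i) /forallP /(_ j) /implyP /(_ ij'); apply: contra.
    apply: connect_sub => x y; rewrite /dep_edge norm_pa => /(subsetP (sub y)) xy.
    exact: connect1.
move=> i j; rewrite norm_pa inE => /andP [_ /existsP [o /existsP [o' /andP [/forallP A /existsP [a /existsP [b B]]]]]].
exists o, o'; split; last by exists a, b.
by move=> l /(implyP (A l)) /eqP.
Qed.

End Norm.

Section Rank.
Variable m : nat.
Variable r : 'I_m -> 'I_m -> bool.
Hypothesis st : strict_tot r.

Definition rank (a : 'I_m) := #|[set b | r b a]|.

Lemma rank_lt a b : r a b -> rank a < rank b.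
Proof.
case: st => Ir Tr _ ab; apply: proper_card; rewrite properE; apply/andP; split.
  apply/subsetP => c; rewrite !inE => ca; exact: Tr ca ab.
apply/subsetPn; exists a; rewrite !inE //; exact: Ir.
Qed.

Lemma rank_iff a b : r a b = (rank a < rank b).
Proof.
case: st => Ir Tr Tot; case ab: (r a b); first by rewrite rank_lt.
case: (eqVneq a b) => [->|ne]; first by rewrite ltnn.
move: (Tot _ _ ne); rewrite ab /= => /rank_lt H; apply/esym/negbTE; rewrite -leqNgt; exact: ltnW.
Qed.

Lemma rank_inj : injective rank.
Proof.
move=> a b E; apply/eqP; apply/negPn/negP => ne.
case: st => _ _ Tot; case/orP: (Tot _ _ ne) => /rank_lt; by rewrite E ltnn.
Qed.

Lemma rank_ltm a : rank a < m.
Proof.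
have : [set b | r b a] \proper [set: 'I_m].
  rewrite properE subsetT /=.
  apply/subsetPn; exists a => //; rewrite inE; by case: st.
by move/proper_card; rewrite cardsT card_ord.
Qed.

Definition rk (a : 'I_m) : 'I_m := Ordinal (rank_ltm a).

Lemma rk_inj : injective rk.
Proof. by move=> a b /(congr1 val) /= /rank_inj. Qed.

Definition elt (t : nat) (d : 'I_m) := odflt d [pick a | rank a == t].

Lemma rank_elt t d : t < m -> rank (elt t d) = t.
Proof.
move=> tm; rewrite /elt; case: pickP => [a /eqP //|/= H].
have := injF_onto rk_inj (Ordinal tm); case/codomP => a /(congr1 val) /= E.
by move: (H a); rewrite -E eqxx.
Qed.

Lemma elt_rank a d : elt (rank a) d = a.
Proof. apply: rank_inj; apply: rank_elt; exact: rank_ltm. Qed.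

Lemma order_det (r' : 'I_m -> 'I_m -> bool) d : strict_tot r' ->
  (forall t, t.+1 < m -> r' (elt t d) (elt t.+1 d)) -> r' =2 r.
Proof.
move=> st' H.
have chain : forall s t, t < s -> s < m -> r' (elt t d) (elt s d).
  case: st' => _ Tr' _.
  elim=> [//|s IH] t ts sm.
  case: (ltngtP t s) => [lt||eq]; last by subst t; exact: H.
    apply: Tr' (IH t lt (ltnW sm)) (H s sm).
  by move=> /leq_trans /(_ ts); rewrite ltnn.
move=> a b.
case: (eqVneq a b) => [->|ne].
  case: st => Ir _ _; case: st' => Ir' _ _; by rewrite (negbTE (Ir b)) (negbTE (Ir' b)).
rewrite rank_iff.
case: (ltngtP (rank a) (rank b)) => [lt|gt|/rank_inj E]; last by rewrite E eqxx in ne.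
  by rewrite -(elt_rank a d) -(elt_rank b d); apply: chain => //; exact: rank_ltm.
have : r' b a by rewrite -(elt_rank a d) -(elt_rank b d); apply: chain => //; exact: rank_ltm.
by move/(st_asym st') => /negbTE.
Qed.

Definition swapv (a b x : 'I_m) := if x == a then b else if x == b then a else x.

Lemma swapvK a b : involutive (swapv a b).
Proof.
move=> x; rewrite /swapv.
case: (eqVneq x a) => [->|xa].
  rewrite eqxx; case: (eqVneq b a) => [->|ba]; by rewrite ?eqxx.
case: (eqVneq x b) => [->|xb]; first by rewrite eqxx.
by rewrite (negbTE xa) (negbTE xb).
Qed.

Lemma swapv_inj a b : injective (swapv a b).
Proof. exact: inv_inj (swapvK a b). Qed.

Lemma adjacent t d x y : t.+1 < m -> x != y ->
  ~~ (((x == elt t d) && (y == elt t.+1 d)) || ((x == elt t.+1 d) && (y == elt t d))) ->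
  r (swapv (elt t d) (elt t.+1 d) x) (swapv (elt t d) (elt t.+1 d) y) = r x y.
Proof.
move=> tm xy H.
have ra := rank_elt d (ltnW tm); have rb := rank_elt d tm.
set a := elt t d in H ra *; set b := elt t.+1 d in H rb *.
have Rs : forall z, rank (swapv a b z) = if z == a then t.+1 else if z == b then t else rank z.
  move=> z; rewrite /swapv; case: (z == a) => //; by case: (z == b).
have Rz : forall z, z != a -> z != b -> (rank z != t) && (rank z != t.+1).
  move=> z za zb; apply/andP; split; apply/negP => /eqP E.
    by move: za; rewrite -(elt_rank z d) E eqxx.
  by move: zb; rewrite -(elt_rank z d) E eqxx.
have rxy : rank x != rank y by apply/negP => /eqP /rank_inj /eqP; rewrite (negbTE xy).
have ab : a != b by apply/negP => /eqP E; move: rb; rewrite -E ra; lia.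
rewrite !rank_iff !Rs.
case: (eqVneq x a) => [Exa|Nxa]; case: (eqVneq y a) => [Eya|Nya];
case: (eqVneq x b) => [Exb|Nxb]; case: (eqVneq y b) => [Eyb|Nyb]; rewrite /= in H *;
  try subst x; try subst y; rewrite ?ra ?rb in rxy *;
  try (by rewrite ?eqxx in xy); try (by []); try (by rewrite ?eqxx /= ?orbT in H);
  try (by exfalso; move/eqP: ab; congruence);
  try (move: (Rz x Nxa Nxb) => /andP [/eqP ? /eqP ?]);
  try (move: (Rz y Nya Nyb) => /andP [/eqP ? /eqP ?]);
  try (move/eqP: rxy => ?); lia.
Qed.

End Rank.

Lemma pad (T : finType) (A B : {set T}) k : A \subset B -> #|A| <= k -> k <= #|B| ->
  exists C : {set T}, [/\ A \subset C, C \subset B & #|C| = k].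
Proof.
move=> AB; move Hd: (k - #|A|) => d; elim: d A AB Hd => [|d IH] A AB Hd Ak kB.
  exists A; split => //; apply/eqP; rewrite eqn_leq Ak /=; lia.
have : ~~ (B \subset A) by apply/negP => /subset_leq_card; lia.
case/subsetPn => x xB xA.
have AB' : x |: A \subset B by rewrite subUset sub1set xB AB.
have C1 : #|x |: A| = #|A|.+1 by rewrite cardsU1 xA.
have [C [h1 h2 h3]] := IH (x |: A) AB' ltac:(lia) ltac:(lia) kB.
exists C; split => //; apply: subset_trans h1; exact: subsetUr.
Qed.

Section Ext.
Variables n m : nat.

Lemma lt_bump (i : 'I_n) (t : 'I_n.-1) : bump i t < n.
Proof. have := ltn_ord t; have := ltn_ord i; rewrite /bump; case: (i <= t) => /=; lia. Qed.

Definition lft (i : 'I_n) (t : 'I_n.-1) : 'I_n := Ordinal (lt_bump i t).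

Lemma lft_inj i : injective (lft i).
Proof. move=> t u /(congr1 val) /= /(can_inj (bumpK i)) E; exact: val_inj. Qed.

Lemma lft_neq i t : lft i t != i.
Proof. apply/negP => /eqP /(congr1 val) /= E; by move: (neq_bump i t); rewrite E eqxx. Qed.

Lemma lft_onto i (j : 'I_n) : j != i -> exists t, lft i t = j.
Proof.
move=> ji.
have lt : unbump i j < n.-1.
  have := ltn_ord j; have := ltn_ord i; move: ji; rewrite /unbump -(inj_eq val_inj) /= => /eqP ji.
  case: ltnP => ij /=; rewrite ?subn1 ?subn0; lia.
exists (Ordinal lt); apply: val_inj => /=; rewrite unbumpKcond.
by rewrite -(inj_eq val_inj) /= in ji; rewrite (negbTE ji).
Qed.

Definition ext (i : 'I_n) (s : {ffun 'I_n.-1 -> 'I_m}) (a : 'I_m) : outcome n m :=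
  [ffun j => if j == i then a else if insub (unbump i j) is Some t then s t else a].

Lemma ext_i i s a : ext i s a i = a.
Proof. by rewrite ffunE eqxx. Qed.

Lemma ext_lft i s a t : ext i s a (lft i t) = s t.
Proof.
rewrite ffunE (negbTE (lft_neq i t)) /=.
case: insubP => [u _ E|]; last by rewrite /= bumpK ltn_ord.
congr (s _); apply: val_inj; by rewrite E /= bumpK.
Qed.

Lemma ext_off i s a b j : j != i -> ext i s a j = ext i s b j.
Proof. move=> ji; case: (lft_onto ji) => t <-; by rewrite !ext_lft. Qed.

End Ext.

Lemma cover_ext n m k (Scov : {set {ffun 'I_n.-1 -> 'I_m}}) : @k_covering n m k Scov -> k <= n - 1 ->
  forall (i : 'I_n) (K : {set 'I_n}), i \notin K -> #|K| <= k -> forall (o : outcome n m) a,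
  exists2 s, s \in Scov & {in K, forall j, ext i s a j = o j}.
Proof.
move=> cov kn i K iK Kk o a.
set K' := [set t | lft i t \in K].
have K'K : #|K'| <= #|K|.
  rewrite -(card_imset _ (@lft_inj n i)); apply: subset_leq_card.
  by apply/subsetP => j /imsetP [t]; rewrite inE => tK ->.
have [C [h1 h2 h3]] := pad (subsetT K') (leq_trans K'K Kk) ltac:(rewrite cardsT card_ord; lia).
move/forallP: cov => /(_ C) /implyP /(_ (introT eqP h3)) /forallP /(_ [ffun t => o (lft i t)]).
case/existsP => s /andP [sS /forall_inP H].
exists s => // j jK.
have ji : j != i by apply/negP => /eqP E; subst j; by rewrite jK in iK.
case: (lft_onto ji) => t E; rewrite -E ext_lft.
have tC : t \in C by apply: (subsetP h1); rewrite inE E.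
by move: (H t tC) => /eqP ->; rewrite ffunE.
Qed.

Lemma bigmin_le (I : finType) (P : pred I) (F : I -> nat) x i0 :
  P i0 -> \big[minn/x]_(i | P i) F i <= F i0.
Proof.
move=> Pi0; have : i0 \in index_enum I := mem_index_enum i0.
elim: (index_enum I) => // a l IH; rewrite big_cons inE; case/orP => [/eqP <-|/IH H].
  by rewrite Pi0 geq_minl.
case: (P a) => //; exact: leq_trans (geq_minr _ _) H.
Qed.

Lemma bigmin_ge (I : finType) (P : pred I) (F : I -> nat) x v :
  v <= x -> (forall i, P i -> v <= F i) -> v <= \big[minn/x]_(i | P i) F i.
Proof.
move=> vx H; elim/big_ind: _ => //; first by move=> a b va vb; rewrite leq_min va vb.
Qed.

Lemma bigmin_attained (I : finType) (P : pred I) (F : I -> nat) x (Q : nat -> Prop) :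
  Q x -> (forall i, P i -> Q (F i)) -> Q (\big[minn/x]_(i | P i) F i).
Proof.
move=> Qx H; elim/big_ind: _ => // a b Qa Qb.
by rewrite /minn; case: ltnP.
Qed.

Section Swaps.
Variables n m : nat.
Implicit Types (N : cpnet n m) (o : outcome n m).

Definition orient (X : {set outcome n m * outcome n m}) (p : outcome n m * outcome n m) :=
  if p \in X then p else (p.2, p.1).

Lemma orient_in X (x y : outcome n m) i : swap_space X ->
  (forall l, l != i -> x l = y l) -> x i != y i -> orient X (x, y) \in X.
Proof.
case/andP => _ /forallP /(_ (x, y)) H A xy.
have sw : is_swap (x, y).
  apply/existsP; exists i; rewrite xy /=; apply/forallP => l; apply/implyP => /A ->; done.
move: (implyP H sw); rewrite /orient; case: ifP => //= nX; by rewrite nX.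
Qed.

Lemma ctx_eq k N i (x y : outcome n m) : validp k N -> (forall l, l != i -> x l = y l) ->
  forall a b, pref N i x a b = pref N i y a b.
Proof.
case=> _ H2 H3 _ _ A; apply: H3 => l li; apply: A; apply/negP => /eqP E; subst l.
by move: (H2 i); rewrite li.
Qed.

Lemma swap_agree k k' N N' X i (x y : outcome n m) : validp k N -> validp k' N' ->
  (forall l, l != i -> x l = y l) -> x i != y i ->
  concept N' (orient X (x, y)) = concept N (orient X (x, y)) ->
  pref N' i y (x i) (y i) = pref N i y (x i) (y i).
Proof.
move=> V V' A xy; rewrite /orient; case: ifP => _.
  by rewrite (swap_concept V A xy) (swap_concept V' A xy).
have A' : forall l, l != i -> y l = x l by move=> l /A ->.
have yx : y i != x i by rewrite eq_sym.
rewrite /= (swap_concept V A' yx) (swap_concept V' A' yx).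
rewrite (ctx_eq V A) (ctx_eq V' A).
case: V => H1 _ _ _ _; case: V' => H1' _ _ _ _.
by rewrite (st_neg (H1 i y) xy) (st_neg (H1' i y) xy) => /negb_inj.
Qed.

Lemma concept_swap k N X x : validp k N -> swap_space X -> x \in X ->
  exists i, [/\ forall l, l != i -> x.1 l = x.2 l, x.1 i != x.2 i &
     concept N x = pref N i x.2 (x.1 i) (x.2 i)].
Proof.
move=> V /andP [/forallP /(_ x) /implyP H _] /H /existsP [i /andP [xi /forallP A]].
have A' : forall l, l != i -> x.1 l = x.2 l by move=> l /(implyP (A l)) /eqP.
exists i; split => //; case: x A' xi {H A} => x1 x2 A' xi; exact: swap_concept V i x1 x2 A' xi.
Qed.
End Swaps.

Lemma card_bigcup_le (T I : finType) (A : I -> {set T}) :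
  #|\bigcup_i A i| <= \sum_i #|A i|.
Proof.
apply: (big_ind2 (fun (S : {set T}) v => #|S| <= v)) => //; first by rewrite cards0.
move=> S1 v1 S2 v2 h1 h2; rewrite cardsU; apply: leq_trans (leq_subr _ _) _; exact: leq_add.
Qed.

Section Upper.
Variables n m k : nat.
Variable X : {set outcome n m * outcome n m}.
Variable N : cpnet n m.
Variable Scov : {set {ffun 'I_n.-1 -> 'I_m}}.
Variable a0 : 'I_m.
Hypothesis V : validp k N.
Hypothesis ND : nondummy N.
Hypothesis SX : swap_space X.
Hypothesis cov : @k_covering n m k Scov.
Hypothesis kn : k <= n - 1.

Definition ctxs (i : 'I_n) (s : {ffun 'I_n.-1 -> 'I_m}) : outcome n m := ext i s a0.
Definition ord (i : 'I_n) (s : {ffun 'I_n.-1 -> 'I_m}) := pref N i (ctxs i s).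

Lemma st_ord i s : strict_tot (ord i s).
Proof. case: V => H1 _ _ _ _; exact: H1. Qed.

Definition covsw (i : 'I_n) (s : {ffun 'I_n.-1 -> 'I_m}) (t : 'I_m.-1) :=
  orient X (ext i s (elt (ord i s) t a0), ext i s (elt (ord i s) t.+1 a0)).

Definition edge_pred (i p : 'I_n) (q : {ffun 'I_n.-1 -> 'I_m} * 'I_m * 'I_m * 'I_m) :=
  (q.1.1.1 \in Scov) &&
  (pref N i (ctxs i q.1.1.1) q.1.2 q.2 != pref N i (upd (ctxs i q.1.1.1) p q.1.1.2) q.1.2 q.2).

Definition edgesw (i p : 'I_n) : outcome n m * outcome n m :=
  if [pick q | edge_pred i p q] is Some q then
    orient X (upd (ext i q.1.1.1 q.1.2) p q.1.1.2, upd (ext i q.1.1.1 q.2) p q.1.1.2)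
  else ([ffun => a0], [ffun => a0]).

Definition Tset := \bigcup_(i : 'I_n)
  ([set covsw i q.1 q.2 | q in setX Scov [set: 'I_m.-1]] :|: [set edgesw i p | p in pa N i]).

Lemma lt_mpred (t : 'I_m.-1) : t.+1 < m.
Proof. have := ltn_ord t; lia. Qed.

Lemma elt_neq i s t : t.+1 < m -> elt (ord i s) t a0 != elt (ord i s) t.+1 a0.
Proof.
move=> tm; apply/negP => /eqP E.
have h1 := rank_elt (st_ord i s) a0 tm.
have h2 := rank_elt (st_ord i s) a0 (ltnW tm).
rewrite -E h2 in h1; lia.
Qed.

Lemma ipa i : i \notin pa N i.
Proof. by case: V. Qed.

Lemma edge_exists i p : p \in pa N i -> exists q, edge_pred i p q.
Proof.
move=> pp; have [o [o' [A [a [b B]]]]] := ND pp.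
case: V => H1 H2 H3 H4 H5.
have [s sS E] := cover_ext cov kn (H2 i) (H4 i) o a0.
exists (s, o' p, a, b); rewrite /edge_pred /= sS /=.
rewrite (H3 i (ctxs i s) o E) (H3 i (upd (ctxs i s) p (o' p)) o'); first exact: B.
move=> l lp; rewrite updE; case: (eqVneq l p) => [->//|lnp]; rewrite E //; exact: A.
Qed.

Lemma edgesw_spec i p : p \in pa N i -> exists q, edge_pred i p q /\
  edgesw i p = orient X (upd (ext i q.1.1.1 q.1.2) p q.1.1.2, upd (ext i q.1.1.1 q.2) p q.1.1.2).
Proof.
move=> pp; rewrite /edgesw; case: pickP => [q Hq|H]; first by exists q.
by have [q] := edge_exists pp; rewrite H.
Qed.

Lemma pi_neq i p : p \in pa N i -> p != i.
Proof. move=> pp; apply/negP => /eqP E; subst p; by move: (ipa i); rewrite pp. Qed.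

Lemma edge_swap i p q : p \in pa N i -> edge_pred i p q ->
  [/\ forall l, l != i -> upd (ext i q.1.1.1 q.1.2) p q.1.1.2 l = upd (ext i q.1.1.1 q.2) p q.1.1.2 l,
      upd (ext i q.1.1.1 q.1.2) p q.1.1.2 i = q.1.2,
      upd (ext i q.1.1.1 q.2) p q.1.1.2 i = q.2 & q.1.2 != q.2].
Proof.
move=> pp /andP [_ B]; split.
- move=> l li; rewrite !updE; case: (l == p) => //; exact: ext_off.
- by rewrite updE eq_sym (negbTE (pi_neq pp)) ext_i.
- by rewrite updE eq_sym (negbTE (pi_neq pp)) ext_i.
apply/negP => /eqP E; move: B; rewrite E.
case: V => H1 _ _ _ _; case: (H1 i (ctxs i q.1.1.1)) => Ir _ _; case: (H1 i (upd (ctxs i q.1.1.1) p q.1.1.2)) => Ir' _ _.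
by rewrite (negbTE (Ir _)) (negbTE (Ir' _)).
Qed.

Lemma Tset_sub : Tset \subset X.
Proof.
apply/subsetP => x /bigcupP [i _]; rewrite inE => /orP [] /imsetP [q].
  case: q => s t; rewrite inE /= => /andP [sS _] -> {x}.
  apply: (@orient_in _ _ _ _ _ i SX); first by move=> l li; exact: ext_off.
  rewrite !ext_i; apply: elt_neq; exact: lt_mpred.
move=> pp ->; have [q' [Hq ->]] := edgesw_spec pp.
have [A B1 B2 ab] := edge_swap pp Hq.
apply: orient_in SX A _; by rewrite B1 B2.
Qed.

Lemma Tset_card : #|Tset| <= n * (#|Scov| * m.-1) + edges N.
Proof.
apply: leq_trans (card_bigcup_le _) _.
apply: (@leq_trans (\sum_i (#|Scov| * m.-1 + #|pa N i|))); last first.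
  by rewrite big_split /= sum_nat_const card_ord.
apply: leq_sum => i _; rewrite cardsU; apply: leq_trans (leq_subr _ _) _.
apply: leq_add; last exact: leq_imset_card.
apply: leq_trans (leq_imset_card _ _) _; by rewrite cardsX cardsT card_ord.
Qed.

Lemma Tset_teach : teaching_set k X Tset N.
Proof.
rewrite /teaching_set Tset_sub /=; apply/forallP => N'; apply/implyP => /valid_validp [V' _].
apply/implyP => /forall_inP Hcons; apply/forall_inP => x _.
apply/eqP; apply: concept_ext => i o a b.
have V0 := V; case: V0 => H1 H2 H3 H4 H5.
have V1 := V'; case: V1 => H1' H2' H3' H4' H5'.
have inT : forall y, y \in
   ([set covsw i q.1 q.2 | q in setX Scov [set: 'I_m.-1]] :|: [set edgesw i p | p in pa N i]) ->
   concept N' y = concept N y.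
  move=> y yin; have : y \in Tset by apply/bigcupP; exists i.
  by move/Hcons/eqP.
have E1 : forall s, s \in Scov -> pref N' i (ctxs i s) =2 pref N i (ctxs i s).
  move=> s sS; apply: (order_det (st_ord i s) (d := a0)); first exact: H1'.
  move=> t tm.
  have tm' : t < m.-1 by lia.
  have yin : covsw i s (Ordinal tm') \in
     ([set covsw i q.1 q.2 | q in setX Scov [set: 'I_m.-1]] :|: [set edgesw i p | p in pa N i]).
    rewrite inE; apply/orP; left; apply/imsetP; exists (s, Ordinal tm') => //.
    by rewrite inE sS inE.
  move: (inT _ yin); rewrite /covsw.
  move/(swap_agree V V' (i := i)).
  have A : forall l, l != i -> ext i s (elt (ord i s) t a0) l = ext i s (elt (ord i s) t.+1 a0) l.
    by move=> l li; exact: ext_off.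
  move/(_ A); rewrite !ext_i => /(_ (elt_neq i s tm)).
  have A2 : forall l, l != i -> ext i s (elt (ord i s) t.+1 a0) l = ctxs i s l.
    by move=> l li; exact: ext_off.
  rewrite (ctx_eq V A2) (ctx_eq V' A2) => ->.
  by rewrite -/(ord i s) (rank_iff (st_ord i s)) (rank_elt (st_ord i s) a0 tm) (rank_elt (st_ord i s) a0 (ltnW tm)).
have E2 : pa N i \subset pa N' i.
  apply/subsetP => p pp; apply/negPn/negP => pN'.
  have [q [Hq Eq]] := edgesw_spec pp.
  have [A B1 B2 ab] := edge_swap pp Hq.
  have := inT (edgesw i p); rewrite inE; move/(_ (introT orP (or_intror (imset_f _ pp)))).
  rewrite Eq => /(swap_agree V V' A); rewrite B1 B2 => /(_ ab).
  set c' := upd (ctxs i q.1.1.1) p q.1.1.2.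
  have A2 : forall l, l != i -> upd (ext i q.1.1.1 q.2) p q.1.1.2 l = c' l.
    by move=> l li; rewrite /c' !updE; case: (l == p) => //; exact: ext_off.
  rewrite (ctx_eq V A2) (ctx_eq V' A2).
  have A3 : {in pa N' i, forall l, c' l = ctxs i q.1.1.1 l}.
    move=> l lp; rewrite /c' updE; case: (eqVneq l p) => // E; subst l; by rewrite lp in pN'.
  rewrite (H3' i _ _ A3) E1; last by case/andP: Hq.
  by move: Hq => /andP [_ /eqP].
have [s sS E] := cover_ext cov kn (H2' i) (H4' i) o a0.
have E' : {in pa N i, forall l, ctxs i s l = o l} by move=> l /(subsetP E2) /E.
by rewrite -(H3' i _ _ E) E1 // (H3 i _ _ E').
Qed.

End Upper.

Lemma card_dep (I J : finType) (A : I -> {set J}) :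
  #|[set q : I * J | q.2 \in A q.1]| = \sum_i #|A i|.
Proof.
rewrite -sum1_card big_mkcond /=.
rewrite [RHS](eq_bigr (fun i => \sum_j (if j \in A i then 1 else 0))); last first.
  by move=> i _; rewrite -sum1_card big_mkcond.
rewrite (pair_big xpredT xpredT (fun i j => if j \in A i then 1 else 0)) /=.
by apply: eq_bigr => q _; rewrite inE.
Qed.

Lemma geom m k : 0 < m -> (m - 1) * \sum_(t < k) m ^ t = m ^ k - 1.
Proof.
move=> m0; elim: k => [|k IH]; first by rewrite big_ord0 muln0 expn0.
rewrite big_ord_recr /= mulnDr IH expnS.
have : 0 < m ^ k by rewrite expn_gt0 m0.
move: (m ^ k) => P P0; nia.
Qed.

Lemma sum_minn n m k : 1 < m -> k < n ->
  (m - 1) * \sum_(t < n) m ^ (minn t k) = (m - 1) * Mk n m k.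
Proof.
move=> m1 kn; rewrite /Mk -(big_mkord xpredT (fun t => m ^ minn t k)) (@big_cat_nat _ _ _ k 0 n xpredT (fun t => m ^ minn t k) (leq0n k) (ltnW kn)) /=.
rewrite (eq_big_nat _ _ (F2 := fun t => m ^ t)); last by move=> t /andP [_ tk]; rewrite (minn_idPl (ltnW tk)).
rewrite (eq_big_nat _ _ (m := k) (F2 := fun t => m ^ k)); last by move=> t /andP [kt _]; rewrite (minn_idPr kt).
rewrite sum_nat_const_nat (big_mkord xpredT (fun t => m ^ t)) -(geom k (ltnW m1)).
rewrite mulKn; last lia.
by rewrite addnC.
Qed.

Section Lower.
Variables n m k : nat.
Variable X : {set outcome n m * outcome n m}.
Variable N : cpnet n m.
Variable a0 : 'I_m.
Hypothesis V : validp k N.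
Hypothesis SX : swap_space X.
Hypothesis kn : k <= n - 1.

Definition key (j : 'I_n) := anc N j * n + j.

Lemma key_inj : injective key.
Proof.
move=> i j E; apply: val_inj => /=.
have : key i %% n = key j %% n by rewrite E.
by rewrite /key !modnMDl !modn_small.
Qed.

Lemma key_lt p i : p \in pa N i -> key p < key i.
Proof.
case: V => _ _ _ _ Ac pi; have := anc_lt Ac pi; rewrite /key.
have := ltn_ord p; have := ltn_ord i; move: (anc N p) (anc N i) => x y; nia.
Qed.

Definition Eset (i : 'I_n) := [set j | key j < key i].

Lemma E_pa i : pa N i \subset Eset i.
Proof. apply/subsetP => p pp; rewrite inE; exact: key_lt. Qed.

Lemma iE i : i \notin Eset i.
Proof. by rewrite inE ltnn. Qed.

Lemma E_lt i : #|Eset i| < n.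
Proof.
have : Eset i \proper [set: 'I_n].
  rewrite properE subsetT /=; apply/subsetPn; exists i => //; exact: iE.
by move/proper_card; rewrite cardsT card_ord.
Qed.

Definition posO i : 'I_n := Ordinal (E_lt i).

Lemma posO_inj : injective posO.
Proof.
have H : forall i j, key i < key j -> #|Eset i| < #|Eset j|.
  move=> i j ij; apply: proper_card; rewrite properE; apply/andP; split.
    apply/subsetP => l; rewrite !inE => li; exact: ltn_trans li ij.
  apply/subsetPn; exists i; by rewrite !inE // ltnn.
move=> i j /(congr1 val) /= E.
case: (ltngtP (key i) (key j)) => [/H|/H|/key_inj //]; by rewrite E ltnn.
Qed.

Definition Qset (i : 'I_n) : {set 'I_n} :=
  odflt set0 [pick Q : {set 'I_n} | [&& pa N i \subset Q, Q \subset Eset i & #|Q| == minn #|Eset i| k]].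

Lemma Q_spec i : [/\ pa N i \subset Qset i, Qset i \subset Eset i & #|Qset i| = minn #|Eset i| k].
Proof.
rewrite /Qset; case: pickP => [Q /and3P [h1 h2 /eqP h3] //|H].
case: V => _ _ _ H4 _.
have l1 : #|pa N i| <= minn #|Eset i| k by rewrite leq_min H4 (subset_leq_card (E_pa i)).
have [C [h1 h2 h3]] := pad (E_pa i) l1 (geq_minl _ _).
by move: (H C); rewrite h1 h2 h3 eqxx.
Qed.

Definition alt (i : 'I_n) (g : outcome n m) (a b : 'I_m) : cpnet n m :=
  ([ffun j => if j == i then Qset i else pa N j],
   [ffun jo : 'I_n * outcome n m =>
      if (jo.1 == i) && [forall l in Qset i, jo.2 l == g l] then
        [ffun xy : 'I_m * 'I_m => pref N i jo.2 (swapv a b xy.1) (swapv a b xy.2)]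
      else N.2 jo]).

Lemma altE i g a b j o x y : pref (alt i g a b) j o x y =
  if (j == i) && [forall l in Qset i, o l == g l] then pref N i o (swapv a b x) (swapv a b y)
  else pref N j o x y.
Proof. rewrite /pref /= ffunE /=; case: ifP => //; by rewrite ffunE. Qed.

Lemma alt_pa i g a b j : pa (alt i g a b) j = if j == i then Qset i else pa N j.
Proof. by rewrite /pa ffunE. Qed.

Lemma connect_key (e : rel 'I_n) : (forall x y, e x y -> key x < key y) ->
  forall x y, connect e x y -> key x <= key y.
Proof.
move=> H x y /connectP [p]; elim: p x => [|z p IH] x /=; first by move=> _ ->.
case/andP => xz pz yl; exact: ltnW (leq_trans (H _ _ xz) (IH z pz yl)).
Qed.

Lemma alt_validp i g a b : validp k (alt i g a b).
Proof.
have V0 := V; case: V0 => H1 H2 H3 H4 H5.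
have [q1 q2 q3] := Q_spec i.
split.
- move=> j o; case: (H1 i o) => Ir Tr Tot; case: (H1 j o) => Ir' Tr' Tot'; split.
  + move=> x; rewrite altE; case: ifP => _; [exact: Ir | exact: Ir'].
  + move=> x y z; rewrite !altE; case: ifP => _; [exact: Tr | exact: Tr'].
  + move=> x y xy; rewrite !altE; case: ifP => _; last exact: Tot'.
    apply: Tot; by rewrite (inj_eq (@swapv_inj _ a b)).
- move=> j; rewrite alt_pa; case: ifP => [/eqP ->|_]; last exact: H2.
  apply/negP => /(subsetP q2); apply/negP; exact: iE.
- move=> j o o'; rewrite alt_pa => A x y; rewrite !altE.
  move: A; case: (eqVneq j i) => [ji|ji] A /=; last exact: H3.
  subst j.
  have -> : [forall l in Qset i, o l == g l] = [forall l in Qset i, o' l == g l].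
    by apply: eq_forallb_in => l /A ->.
  by case: ifP => _; apply: H3 => l /(subsetP q1) /A.
- move=> j; rewrite alt_pa; case: ifP => _; last exact: H4.
  by rewrite q3 geq_minr.
have Hk : forall p q, dep_edge (alt i g a b) p q -> key p < key q.
  move=> p q; rewrite /dep_edge alt_pa; case: ifP => [/eqP -> /(subsetP q2)|_ /key_lt //].
  by rewrite inE.
apply/forallP => p; apply/forallP => q; apply/implyP => pq; apply/negP => /(connect_key Hk) qp.
have := Hk _ _ pq; lia.
Qed.

Lemma Q_pa i : pa N i \subset Qset i. Proof. by case: (Q_spec i). Qed.
Lemma Q_E i : Qset i \subset Eset i. Proof. by case: (Q_spec i). Qed.

Definition ea (i : 'I_n) (g : outcome n m) (t : nat) := elt (pref N i g) t a0.

Definition blk (i : 'I_n) (g : outcome n m) (t : nat) (w : outcome n m * outcome n m) : bool :=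
  [&& [forall l, (l != i) ==> (w.1 l == w.2 l)], w.1 i != w.2 i, [forall l in Qset i, w.2 l == g l] &
      ((w.1 i == ea i g t) && (w.2 i == ea i g t.+1)) || ((w.1 i == ea i g t.+1) && (w.2 i == ea i g t))].

Lemma st_g (i : 'I_n) (g : outcome n m) : strict_tot (pref N i g).
Proof. by case: V => H1 _ _ _ _; exact: H1. Qed.

Lemma ctxQ (i : 'I_n) (g o : outcome n m) : [forall l in Qset i, o l == g l] -> forall x y, pref N i o x y = pref N i g x y.
Proof.
move/forall_inP => C x y; case: V => _ _ H3 _ _; apply: H3 => l /(subsetP (Q_pa i)) /C /eqP //.
Qed.

Lemma alt_diff (i : 'I_n) (g : outcome n m) t x : t.+1 < m -> x \in X ->
  concept (alt i g (ea i g t) (ea i g t.+1)) x != concept N x -> blk i g t x.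
Proof.
move=> tm xX.
have [j [A xj E]] := concept_swap V SX xX.
case: x xX A xj E => x1 x2 xX /= A xj E.
rewrite E (swap_concept (alt_validp _ _ _ _) A xj) altE.
case: (eqVneq j i) => [ji|ji] /=; last by rewrite eqxx.
subst j; case: ifP => C; last by rewrite eqxx.
rewrite !(ctxQ C) => D.
apply/and4P; split => //.
  by apply/forallP => l; apply/implyP => /A ->.
apply/negPn/negP => H; move: D; rewrite /= in H; rewrite (adjacent (st_g i g) (d := a0) tm xj H); by rewrite eqxx.
Qed.

Lemma ea_neq (i : 'I_n) (g : outcome n m) t : t.+1 < m -> ea i g t != ea i g t.+1.
Proof.
move=> tm; apply/negP => /eqP E.
have h1 := rank_elt (st_g i g) a0 tm.
have h2 := rank_elt (st_g i g) a0 (ltnW tm).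
rewrite /ea in E; rewrite -E h2 in h1; lia.
Qed.

Lemma ea_lt (i : 'I_n) (g : outcome n m) t : t.+1 < m -> pref N i g (ea i g t) (ea i g t.+1).
Proof.
move=> tm; rewrite (rank_iff (st_g i g)) /ea (rank_elt (st_g i g) a0 tm) (rank_elt (st_g i g) a0 (ltnW tm)).
exact: ltnSn.
Qed.

Lemma iQ i : i \notin Qset i.
Proof. apply/negP => /(subsetP (Q_E i)); apply/negP; exact: iE. Qed.

Lemma alt_witness (i : 'I_n) (g : outcome n m) t : t.+1 < m ->
  exists2 z, z \in X & concept (alt i g (ea i g t) (ea i g t.+1)) z != concept N z.
Proof.
move=> tm.
set a := ea i g t; set b := ea i g t.+1.
have ab : a != b := ea_neq i g tm.
have rab : pref N i g a b := ea_lt i g tm.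
have rba : pref N i g b a = false by apply/negbTE; exact: st_asym (st_g i g) rab.
have sa : swapv a b a = b by rewrite /swapv eqxx.
have sb : swapv a b b = a by rewrite /swapv eq_sym (negbTE ab) eqxx.
set x := upd g i a; set y := upd g i b.
have A : forall l, l != i -> x l = y l by move=> l li; rewrite !updE (negbTE li).
have A' : forall l, l != i -> y l = x l by move=> l /A ->.
have xy : x i != y i by rewrite !updE eqxx.
have yx : y i != x i by rewrite eq_sym.
have cond : forall v, [forall l in Qset i, upd g i v l == g l].
  move=> v; apply/forall_inP => l lQ; rewrite updE; case: (eqVneq l i) => // E; subst l.
  by move: (iQ i); rewrite lQ.
exists (orient X (x, y)); first exact: orient_in SX A xy.
rewrite /orient; case: ifP => _ /=.
  rewrite (swap_concept V A xy) (swap_concept (alt_validp _ _ _ _) A xy) altE eqxx cond /=.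
  by rewrite !(ctxQ (cond b)) !updE eqxx sa sb rab rba.
rewrite (swap_concept V A' yx) (swap_concept (alt_validp _ _ _ _) A' yx) altE eqxx cond /=.
by rewrite !(ctxQ (cond a)) !updE eqxx sa sb rab rba.
Qed.


Lemma lt_mpred' (t : 'I_m.-1) : t.+1 < m.
Proof. have := ltn_ord t; lia. Qed.

Lemma lower_S S : teaching_set k X S N -> \sum_i m ^ #|Qset i| * m.-1 <= #|S|.
Proof.
case/andP => SsubX /forallP Teach.
have ex : forall (i : 'I_n) (g : outcome n m) (t : 'I_m.-1), [exists w in S, blk i g t w].
  move=> i g t; have tm := lt_mpred' t.
  apply: contraT => /exists_inPn none.
  set N' := alt i g (ea i g t) (ea i g t.+1).
  have VN := norm_valid (alt_validp i g (ea i g t) (ea i g t.+1)).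
  have CE := concept_ext (norm_pref N').
  move: (Teach (norm N')) => /implyP /(_ VN) /implyP H.
  have Hc : [forall x in S, concept (norm N') x == concept N x].
    apply/forall_inP => x xS; rewrite CE; apply/negPn/negP => D.
    by have := alt_diff tm (subsetP SsubX x xS) D; rewrite (negbTE (none x xS)).
  move: (H Hc) => /forall_inP AllX.
  have [z zX zD] := alt_witness i g tm.
  by move: (AllX z zX); rewrite CE (negbTE zD).
pose G (i : 'I_n) := [set g : outcome n m | g \in pffun_on a0 (Qset i) [set: 'I_m]].
pose D := [set q : 'I_n * (outcome n m * 'I_m.-1) | q.2 \in setX (G q.1) [set: 'I_m.-1]].
pose dflt : outcome n m * outcome n m := ([ffun=> a0], [ffun=> a0]).
pose f (q : 'I_n * (outcome n m * 'I_m.-1)) := odflt dflt [pick w in S | blk q.1 q.2.1 q.2.2 w].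
have f_spec : forall q, f q \in S /\ blk q.1 q.2.1 q.2.2 (f q).
  move=> q; rewrite /f; case: pickP => [w /andP [] //|H].
  by move: (ex q.1 q.2.1 q.2.2) => /exists_inP [w wS wb]; move: (H w); rewrite /= wS wb.
have f_inj : {in D &, injective f}.
  move=> [i [g t]] [i' [g' t']]; rewrite !inE /= => /andP [gG _] /andP [gG' _] E.
  have [_ wb] := f_spec (i, (g, t)); have [_ wb'] := f_spec (i', (g', t')).
  rewrite /= E in wb wb'.
  move: wb => /and4P [/forallP A1 d1 /forall_inP c1 r1].
  move: wb' => /and4P [/forallP A1' d1' /forall_inP c1' r1'].
  have ii : i = i'.
    apply/eqP/negPn/negP => ne.
    by move: (A1' i); rewrite ne /= (negbTE d1).
  subst i'.
  have gg : g = g'.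
    apply/ffunP => l; case: (boolP (l \in Qset i)) => lQ.
      by rewrite -(eqP (c1 l lQ)) -(eqP (c1' l lQ)).
    move: gG gG' => /pffun_onP [/subsetP S1 _] /pffun_onP [/subsetP S2 _].
    have e1 : g l = a0 by apply/eqP/negPn/negP => /(S1 l) /=; rewrite (negbTE lQ).
    have e2 : g' l = a0 by apply/eqP/negPn/negP => /(S2 l) /=; rewrite (negbTE lQ).
    by rewrite e1 e2.
  subst g'.
  have tt : t = t' :> nat.
    have tm := lt_mpred' t; have tm' := lt_mpred' t'.
    have st := st_g i g.
    have R1 := rank_elt st a0 tm; have R2 := rank_elt st a0 (ltnW tm).
    have R3 := rank_elt st a0 tm'; have R4 := rank_elt st a0 (ltnW tm').
    rewrite /ea in r1 r1'.
    set w := f _ in r1 r1'.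
    case/orP: r1 => /andP [/eqP e1 /eqP e2]; case/orP: r1' => /andP [/eqP e3 /eqP e4];
      move: R1 R2 R3 R4; rewrite -?e1 -?e2 -?e3 -?e4; lia.
  by rewrite (val_inj tt).
have DS : #|D| <= #|S|.
  rewrite -(card_in_imset f_inj); apply: subset_leq_card; apply/subsetP => w /imsetP [q _ ->].
  exact: (f_spec q).1.
apply: leq_trans DS.
rewrite /D (card_dep (fun i => setX (G i) [set: 'I_m.-1])).
apply: eq_leq; apply: eq_bigr => i _.
by rewrite cardsX cardsT !card_ord /G cardsE card_pffun_on cardsT card_ord.
Qed.

Lemma lower_sum : 1 < m -> 0 < n -> (m - 1) * Mk n m k = \sum_i m ^ #|Qset i| * m.-1.
Proof.
move=> m1 n0; rewrite -sum_minn //; last lia.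
rewrite (reindex_inj posO_inj) big_distrr /=; apply: eq_bigr => i _.
case: (Q_spec i) => _ _ ->; by rewrite mulnC subn1.
Qed.

End Lower.

Theorem lemma10 (n m k : nat) (X : {set outcome n m * outcome n m})
    (N : cpnet n m) :
  1 <= n -> 2 <= m -> k <= n - 1 ->
  swap_space X -> valid_cpnet k N ->
  (m - 1) * Mk n m k <= TD k X N /\ TD k X N <= edges N + n * (m - 1) * Uk n m k.
Proof.
move=> n1 m2 kn SX VN.
have [V ND] := valid_validp VN.
have a0 : 'I_m := Ordinal (ltnW m2).
split.
  rewrite /TD (lower_sum V SX kn m2 n1); apply: bigmin_ge.
    apply: (lower_S a0 V SX kn).
    rewrite /teaching_set subxx /=; apply/forallP => N'; apply/implyP => _; exact/implyP.
  move=> S TS; exact: (lower_S a0 V SX kn TS).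
have [Scov [covS cardS]] : exists Scov, @k_covering n m k Scov /\ #|Scov| <= Uk n m k.
  rewrite /Uk; apply: (bigmin_attained (Q := fun v => exists S, @k_covering n m k S /\ #|S| <= v)).
    exists setT; rewrite cardsT leqnn; split => //.
    apply/forallP => K; apply/implyP => _; apply/forallP => v; apply/exists_inP; exists v => //.
    by apply/forall_inP.
  by move=> S cS; exists S.
have T1 := @bigmin_le _ (fun S => teaching_set k X S N) (fun S : {set outcome n m * outcome n m} => #|S|) #|X| _ (Tset_teach a0 V ND SX covS kn).
rewrite /TD; apply: leq_trans T1 _.
apply: leq_trans (Tset_card X N Scov a0) _.
rewrite addnC leq_add2l.
have E : m - 1 = m.-1 by rewrite subn1.
rewrite E; move: cardS; move: #|Scov| (Uk n m k) => a b ab.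
rewrite -mulnA leq_mul2l; apply/orP; right; rewrite mulnC leq_mul2l ab orbT //.
Qed.
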